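(* For GCWN networks $M,M',N$ and any label $\delta$ (either $p:\alpha$ or $\tau$), if $M\xrightarrow{\delta}M'$ and $M\equiv N$, then there exists $N'$ such that $N\xrightarrow{\delta}N'$ and $M'\equiv N'$.
   Context: GCWN syntax. Fix a countable set ${\sf Loc}$ of locations, channel names $c,d,\dots$ with co-names $\overline{c}$, variables, values $v$ (not channels), expressions $e$, boolean expressions $b$, and an evaluation ${\sf eval}$ on variable-free expressions. A finite graph $G=(|G|,\frown_G)$ has a finite vertex set $|G|\subseteq{\sf Loc}$ and a symmetric irreflexive edge relation. For disjoint $G,H$ and $D\subseteq|G|\times|H|$, $G\oplus_D H$ has vertices $|G|\cup|H|$ and edges those of $G$, those of $H$ and (symmetrically) the pairs in $D$. Processes: $P::={\bf 0}\mid c(x).P\mid\overline{c}(e).P\mid P+Q\mid{\bf if}~b~{\bf then}~P~{\bf else}~Q\mid A(\vec v)$ with process constants defined by $A(\vec x)\stackrel{\rm def}{=}P$. Networks: $M::=G\langle\Phi\rangle\mid M\backslash c\mid M\oplus_D N$ with $\Phi:|G|\to$ processes; every network is of the form $G\langle\Phi\rangle\backslash I$, and for $M=G\langle\Phi\rangle\backslash I$, $N=H\langle\Psi\rangle\backslash J$ (disjoint locations, $I\cap J=\emptyset$), $M\oplus_D N=(G\oplus_D H)\langle\Phi\cup\Psi\rangle\backslash(I\cup J)$. Write $|M|=|G|$, $M(p)=\Phi(p)$, $\frown_M=\frown_G$, $M[p\mapsto Q]$ for replacing the process at $p$ by $Q$. Networks are data-closed. Structural congruence $\equiv$: least congruence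 with $P+{\bf 0}\equiv P$, $P+Q\equiv Q+P$, $P+(Q+R)\equiv(P+Q)+R$, conditionals equal to the branch selected by ${\sf eval}(b)$, $A(\vec v)\equiv P\{\vec v/\vec x\}$ for $A(\vec x)\stackrel{\rm def}{=}P$, $\alpha$-conversion of restricted channels, $M\backslash c\backslash d\equiv M\backslash d\backslash c$, $M\oplus_D N\equiv N\oplus_D M$, $(M\oplus_D N)\backslash c\equiv M\oplus_D(N\backslash c)$ if $c,\overline c$ not in $M$, and $G\langle\Phi\rangle\equiv G\langle\Psi\rangle$ if $\Phi(p)\equiv\Psi(p)$ for all $p$. Labelled transitions. Actions $\alpha::=cv\mid\overline{c}v$. Processes: $\overline{c}(e).P\xrightarrow{\overline{c}v}P$ if ${\sf eval}(e)=v$; $c(x).P\xrightarrow{cv}P\{v/x\}$; $P+Q$ does any transition of $P$ or of $Q$; ${\bf if}~b~{\bf then}~P~{\bf else}~Q$ does the transitions of $P$ if ${\sf eval}(b)=true$, of $Q$ if $false$; $A(\vec v)$ does the transitions of $P\{\vec v/\vec x\}$ where $A(\vec x)\stackrel{\rm def}{=}P$. Networks, labels $\delta::=p:\alpha\mid\tau$: (N-Send) if $p\in|M|$ and $M(p)\xrightarrow{\overline cv}P'$ then $M\xrightarrow{p:\overline cv}M[p\mapsto P']$; (N-Recv) if $p\in|M|$ and $M(p)\xrightarrow{cv}P'$ then $M\xrightarrow{p:cv}M[p\mapsto P']$; (N-Bcast) if $M\xrightarrow{p:\overline cv}M'$, $N\xrightarrow{q:cv}N'$ and $(p,q)\in D$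 then $M\oplus_D N\xrightarrow{p:\overline cv}M'\oplus_D N'$ and $N\oplus_D M\xrightarrow{p:\overline cv}N'\oplus_D M'$; (N-Res1) $M\xrightarrow{p:\overline cv}M'$ implies $M\backslash c\xrightarrow{\tau}M'\backslash c$; (N-Res2) $M\xrightarrow{\delta}M'$ with $c,\overline c$ not in $\delta$ implies $M\backslash c\xrightarrow{\delta}M'\backslash c$; (N-ParL/R) $M\xrightarrow{\delta}M'$ implies $M\oplus_D N\xrightarrow{\delta}M'\oplus_D N$, and $N\xrightarrow{\delta}N'$ implies $M\oplus_D N\xrightarrow{\delta}M\oplus_D N'$. *)

(* Defs.v *)
From HB Require Import structures.
From mathcomp Require Import all_boot finmap.

Set Implicit Arguments.
Unset Strict Implicit.
Unset Printing Implicit Defensive.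

Local Open Scope fset_scope.

Definition loc := nat.
Definition chan := nat.
Definition var := nat.
Definition val := nat.
Definition pconst := nat.

Inductive expr :=
| EVal (v : val) | EVar (x : var)
| EAdd (e1 e2 : expr) | ESub (e1 e2 : expr) | EMul (e1 e2 : expr).

Inductive bexp :=
| BTrue | BFalse
| BEq (e1 e2 : expr) | BLe (e1 e2 : expr)
| BNot (b : bexp) | BAnd (b1 b2 : bexp).

Definition olift2 {A B : Type} (f : A -> A -> B) (o1 o2 : option A) :=
  match o1, o2 with Some a, Some b => Some (f a b) | _, _ => None end.

(* eval is defined (Some _) exactly on variable-free expressions *)
Fixpoint eval (e : expr) : option val :=
  match e with
  | EVal v => Some v
  | EVar _ => None
  | EAdd e1 e2 => olift2 addn (eval e1) (eval e2)
  | ESub e1 e2 => olift2 subn (eval e1) (eval e2)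
  | EMul e1 e2 => olift2 muln (eval e1) (eval e2)
  end.

Fixpoint evalb (b : bexp) : option bool :=
  match b with
  | BTrue => Some true
  | BFalse => Some false
  | BEq e1 e2 => olift2 (fun a b => a == b) (eval e1) (eval e2)
  | BLe e1 e2 => olift2 leq (eval e1) (eval e2)
  | BNot b => omap negb (evalb b)
  | BAnd b1 b2 => olift2 andb (evalb b1) (evalb b2)
  end.

Fixpoint substE (x : var) (v : val) (e : expr) : expr :=
  match e with
  | EVal w => EVal w
  | EVar y => if y == x then EVal v else EVar y
  | EAdd e1 e2 => EAdd (substE x v e1) (substE x v e2)
  | ESub e1 e2 => ESub (substE x v e1) (substE x v e2)
  | EMul e1 e2 => EMul (substE x v e1) (substE x v e2)
  end.

Fixpoint substB (x : var) (v : val) (b : bexp) : bexp :=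
  match b with
  | BTrue => BTrue
  | BFalse => BFalse
  | BEq e1 e2 => BEq (substE x v e1) (substE x v e2)
  | BLe e1 e2 => BLe (substE x v e1) (substE x v e2)
  | BNot b => BNot (substB x v b)
  | BAnd b1 b2 => BAnd (substB x v b1) (substB x v b2)
  end.

Fixpoint fvE (x : var) (e : expr) : bool :=
  match e with
  | EVal _ => false
  | EVar y => y == x
  | EAdd e1 e2 | ESub e1 e2 | EMul e1 e2 => fvE x e1 || fvE x e2
  end.

Fixpoint fvB (x : var) (b : bexp) : bool :=
  match b with
  | BTrue | BFalse => false
  | BEq e1 e2 | BLe e1 e2 => fvE x e1 || fvE x e2
  | BNot b => fvB x b
  | BAnd b1 b2 => fvB x b1 || fvB x b2
  end.

Inductive proc :=
| PNil
| PIn (c : chan) (x : var) (P : proc)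
| POut (c : chan) (e : expr) (P : proc)
| PSum (P Q : proc)
| PIf (b : bexp) (P Q : proc)
| PCall (A : pconst) (vs : seq val).

(* P{v/x} (values are closed, so no capture can occur) *)
Fixpoint substP (x : var) (v : val) (P : proc) : proc :=
  match P with
  | PNil => PNil
  | PIn c y Q => if y == x then PIn c y Q else PIn c y (substP x v Q)
  | POut c e Q => POut c (substE x v e) (substP x v Q)
  | PSum P1 P2 => PSum (substP x v P1) (substP x v P2)
  | PIf b P1 P2 => PIf (substB x v b) (substP x v P1) (substP x v P2)
  | PCall A vs => PCall A vs
  end.

Fixpoint substsP (xs : seq var) (vs : seq val) (P : proc) : proc :=
  match xs, vs with
  | x :: xs', v :: vs' => substsP xs' vs' (substP x v P)
  | _, _ => P
  end.

Fixpoint fvP (x : var) (P : proc) : bool :=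
  match P with
  | PNil => false
  | PIn _ y Q => (y != x) && fvP x Q
  | POut _ e Q => fvE x e || fvP x Q
  | PSum P1 P2 => fvP x P1 || fvP x P2
  | PIf b P1 P2 => fvB x b || fvP x P1 || fvP x P2
  | PCall _ _ => false
  end.

(* Process-constant definitions: A(\vec x) =def P is  defs A = (\vec x, P). *)
Definition defs := pconst -> seq var * proc.

Definition defs_ok (D : defs) : Prop :=
  forall A x, fvP x (D A).2 -> x \in (D A).1.

Inductive act := AIn (c : chan) (v : val) | AOut (c : chan) (v : val).

Inductive ptrans (Dl : defs) : proc -> act -> proc -> Prop :=
| pt_out c e P v : eval e = Some v -> ptrans Dl (POut c e P) (AOut c v) P
| pt_in c x P v : ptrans Dl (PIn c x P) (AIn c v) (substP x v P)
| pt_sumL P Q a P' : ptrans Dl P a P' -> ptrans Dl (PSum P Q) a P'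
| pt_sumR P Q a Q' : ptrans Dl Q a Q' -> ptrans Dl (PSum P Q) a Q'
| pt_ifT b P Q a P' : evalb b = Some true -> ptrans Dl P a P' ->
    ptrans Dl (PIf b P Q) a P'
| pt_ifF b P Q a Q' : evalb b = Some false -> ptrans Dl Q a Q' ->
    ptrans Dl (PIf b P Q) a Q'
| pt_call A vs a P' : size vs = size (Dl A).1 ->
    ptrans Dl (substsP (Dl A).1 vs (Dl A).2) a P' ->
    ptrans Dl (PCall A vs) a P'.

Inductive pcong (Dl : defs) : proc -> proc -> Prop :=
| pc_refl P : pcong Dl P P
| pc_sym P Q : pcong Dl P Q -> pcong Dl Q P
| pc_trans P Q R : pcong Dl P Q -> pcong Dl Q R -> pcong Dl P R
| pc_in c x P Q : pcong Dl P Q -> pcong Dl (PIn c x P) (PIn c x Q)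
| pc_out c e P Q : pcong Dl P Q -> pcong Dl (POut c e P) (POut c e Q)
| pc_sum P P' Q Q' : pcong Dl P P' -> pcong Dl Q Q' ->
    pcong Dl (PSum P Q) (PSum P' Q')
| pc_if b P P' Q Q' : pcong Dl P P' -> pcong Dl Q Q' ->
    pcong Dl (PIf b P Q) (PIf b P' Q')
| pc_sum0 P : pcong Dl (PSum P PNil) P
| pc_sumC P Q : pcong Dl (PSum P Q) (PSum Q P)
| pc_sumA P Q R : pcong Dl (PSum P (PSum Q R)) (PSum (PSum P Q) R)
| pc_ifT b P Q : evalb b = Some true -> pcong Dl (PIf b P Q) P
| pc_ifF b P Q : evalb b = Some false -> pcong Dl (PIf b P Q) Q
| pc_call A vs : size vs = size (Dl A).1 ->
    pcong Dl (PCall A vs) (substsP (Dl A).1 vs (Dl A).2).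

Inductive occP (Dl : defs) (c : chan) : proc -> Prop :=
| occ_in_here x P : occP Dl c (PIn c x P)
| occ_in_under d x P : occP Dl c P -> occP Dl c (PIn d x P)
| occ_out_here e P : occP Dl c (POut c e P)
| occ_out_under d e P : occP Dl c P -> occP Dl c (POut d e P)
| occ_sumL P Q : occP Dl c P -> occP Dl c (PSum P Q)
| occ_sumR P Q : occP Dl c Q -> occP Dl c (PSum P Q)
| occ_ifL b P Q : occP Dl c P -> occP Dl c (PIf b P Q)
| occ_ifR b P Q : occP Dl c Q -> occP Dl c (PIf b P Q)
| occ_call A vs : occP Dl c (Dl A).2 -> occP Dl c (PCall A vs).

(* P contains a call to a constant whose body (transitively) mentions c;
   syntactic renaming of c in P would not reach such occurrences. *)
Inductive calloccP (Dl : defs) (c : chan) : proc -> Prop :=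
| co_call A vs : occP Dl c (Dl A).2 -> calloccP Dl c (PCall A vs)
| co_in d x P : calloccP Dl c P -> calloccP Dl c (PIn d x P)
| co_out d e P : calloccP Dl c P -> calloccP Dl c (POut d e P)
| co_sumL P Q : calloccP Dl c P -> calloccP Dl c (PSum P Q)
| co_sumR P Q : calloccP Dl c Q -> calloccP Dl c (PSum P Q)
| co_ifL b P Q : calloccP Dl c P -> calloccP Dl c (PIf b P Q)
| co_ifR b P Q : calloccP Dl c Q -> calloccP Dl c (PIf b P Q).

Definition renC (c d e : chan) : chan := if e == c then d else e.

Fixpoint renP (c d : chan) (P : proc) : proc :=
  match P with
  | PNil => PNil
  | PIn e x Q => PIn (renC c d e) x (renP c d Q)
  | POut e ex Q => POut (renC c d e) ex (renP c d Q)
  | PSum P1 P2 => PSum (renP c d P1) (renP c d P2)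
  | PIf b P1 P2 => PIf b (renP c d P1) (renP c d P2)
  | PCall A vs => PCall A vs
  end.

(* NBase V E Phi  = G<Phi> with |G| = V and edge relation E,
   NRes M c       = M \ c,
   NPar M D N     = M (+)_D N. *)
Inductive net :=
| NBase (V : {fset loc}) (E : rel loc) (Phi : loc -> proc)
| NRes (M : net) (c : chan)
| NPar (M : net) (D : rel loc) (N : net).

Fixpoint inloc (p : loc) (M : net) : bool :=
  match M with
  | NBase V _ _ => p \in V
  | NRes M _ => inloc p M
  | NPar M _ N => inloc p M || inloc p N
  end.

Fixpoint isres (c : chan) (M : net) : bool :=
  match M with
  | NBase _ _ _ => false
  | NRes M d => (d == c) || isres c M
  | NPar M _ N => isres c M || isres c N
  end.

Fixpoint wf (M : net) : Prop :=
  match M with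
  | NBase V E Phi =>
      [/\ forall p q, E p q -> (p \in V) && (q \in V),
          forall p q, E p q = E q p,
          forall p, ~~ E p p &
          forall p x, p \in V -> ~~ fvP x (Phi p)]
  | NRes M _ => wf M
  | NPar M D N =>
      [/\ wf M, wf N,
          forall p, ~~ (inloc p M && inloc p N),
          forall p q, D p q -> (inloc p M && inloc q N) || (inloc p N && inloc q M) &
          forall c, ~~ (isres c M && isres c N)]
  end.

Fixpoint occN (Dl : defs) (c : chan) (M : net) : Prop :=
  match M with
  | NBase V _ Phi => exists2 p, p \in V & occP Dl c (Phi p)
  | NRes M d => c = d \/ occN Dl c M
  | NPar M _ N => occN Dl c M \/ occN Dl c N
  end.

Fixpoint fcN (Dl : defs) (c : chan) (M : net) : Prop :=
  match M with
  | NBase V _ Phi => exists2 p, p \in V & occP Dl c (Phi p)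
  | NRes M d => c <> d /\ fcN Dl c M
  | NPar M _ N => fcN Dl c M \/ fcN Dl c N
  end.

(* free occurrences of c in M are all syntactically visible (not hidden
   inside constant bodies), so that the renaming renN c d M is correct *)
Fixpoint renokN (Dl : defs) (c : chan) (M : net) : Prop :=
  match M with
  | NBase V _ Phi => forall p, p \in V -> ~ calloccP Dl c (Phi p)
  | NRes M d => d = c \/ renokN Dl c M
  | NPar M _ N => renokN Dl c M /\ renokN Dl c N
  end.

Fixpoint renN (c d : chan) (M : net) : net :=
  match M with
  | NBase V E Phi => NBase V E (fun p => renP c d (Phi p))
  | NRes M e => if e == c then NRes M e else NRes (renN c d M) e
  | NPar M D N => NPar (renN c d M) D (renN c d N)
  end.

Inductive ncong (Dl : defs) : net -> net -> Prop :=
| nc_refl M : ncong Dl M M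
| nc_sym M N : ncong Dl M N -> ncong Dl N M
| nc_trans M N O : ncong Dl M N -> ncong Dl N O -> ncong Dl M O
| nc_res M N c : ncong Dl M N -> ncong Dl (NRes M c) (NRes N c)
| nc_par M M' D N N' : ncong Dl M M' -> ncong Dl N N' ->
    ncong Dl (NPar M D N) (NPar M' D N')
| nc_base V E Phi Psi : (forall p, p \in V -> pcong Dl (Phi p) (Psi p)) ->
    ncong Dl (NBase V E Phi) (NBase V E Psi)
| nc_alpha M c d : ~ occN Dl d M -> renokN Dl c M ->
    ncong Dl (NRes M c) (NRes (renN c d M) d)
| nc_swap M c d : ncong Dl (NRes (NRes M c) d) (NRes (NRes M d) c)
| nc_comm M D N : ncong Dl (NPar M D N) (NPar N D M)
| nc_extr M D N c : ~ fcN Dl c M ->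
    ncong Dl (NRes (NPar M D N) c) (NPar M D (NRes N c)).

Inductive lab := LAct (p : loc) (a : act) | LTau.

Definition act_chan (a : act) : chan :=
  match a with AIn c _ => c | AOut c _ => c end.

Definition chan_in_lab (c : chan) (l : lab) : bool :=
  match l with LAct _ a => act_chan a == c | LTau => false end.

Definition upd (Phi : loc -> proc) (p : loc) (P : proc) : loc -> proc :=
  fun q => if q == p then P else Phi q.

Definition edgeD (D : rel loc) (p q : loc) : bool := D p q || D q p.

Inductive ntrans (Dl : defs) : net -> lab -> net -> Prop :=
| nt_send V E Phi p c v P' : p \in V -> ptrans Dl (Phi p) (AOut c v) P' ->
    ntrans Dl (NBase V E Phi) (LAct p (AOut c v)) (NBase V E (upd Phi p P'))
| nt_recv V E Phi p c v P' : p \in V -> ptrans Dl (Phi p) (AIn c v) P' ->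
    ntrans Dl (NBase V E Phi) (LAct p (AIn c v)) (NBase V E (upd Phi p P'))
| nt_bcastL M M' N N' D p q c v :
    ntrans Dl M (LAct p (AOut c v)) M' -> ntrans Dl N (LAct q (AIn c v)) N' ->
    edgeD D p q ->
    ntrans Dl (NPar M D N) (LAct p (AOut c v)) (NPar M' D N')
| nt_bcastR M M' N N' D p q c v :
    ntrans Dl M (LAct p (AOut c v)) M' -> ntrans Dl N (LAct q (AIn c v)) N' ->
    edgeD D p q ->
    ntrans Dl (NPar N D M) (LAct p (AOut c v)) (NPar N' D M')
| nt_res1 M M' p c v : ntrans Dl M (LAct p (AOut c v)) M' ->
    ntrans Dl (NRes M c) LTau (NRes M' c)
| nt_res2 M M' l c : ntrans Dl M l M' -> ~~ chan_in_lab c l ->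
    ntrans Dl (NRes M c) l (NRes M' c)
| nt_parL M M' D N l : ntrans Dl M l M' ->
    ntrans Dl (NPar M D N) l (NPar M' D N)
| nt_parR M D N N' l : ntrans Dl N l N' ->
    ntrans Dl (NPar M D N) l (NPar M D N').

(* Main.v *)
Require Import Defs.
From mathcomp Require Import all_boot finmap.
From Stdlib Require Import FunctionalExtensionality.
Set Implicit Arguments.
Unset Strict Implicit.

Lemma eval_substE x v e n : eval e = Some n -> substE x v e = e.
Proof.
elim: e n => //= [e1 IH1 e2 IH2|e1 IH1 e2 IH2|e1 IH1 e2 IH2] n;
  case E1: (eval e1) => [a|] //; case E2: (eval e2) => [b|] //= _;
  by rewrite (IH1 a) // (IH2 b).
Qed.

Lemma evalb_substB x v b n : evalb b = Some n -> substB x v b = b.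
Proof.
elim: b n => //=.
- move=> e1 e2 n; case E1: (eval e1) => [a|] //; case E2: (eval e2) => [b|] //= _.
  by rewrite (eval_substE _ _ E1) (eval_substE _ _ E2).
- move=> e1 e2 n; case E1: (eval e1) => [a|] //; case E2: (eval e2) => [b|] //= _.
  by rewrite (eval_substE _ _ E1) (eval_substE _ _ E2).
- move=> b IH n; case E: (evalb b) => [a|] //= _; by rewrite (IH a).
- move=> b1 IH1 b2 IH2 n; case E1: (evalb b1) => [a|] //; case E2: (evalb b2) => [c|] //= _.
  by rewrite (IH1 a) // (IH2 c).
Qed.

Lemma fvE_substE y x v e : fvE y (substE x v e) -> fvE y e && (y != x).
Proof.
elim: e => //=.
- move=> z; case: eqP => [->|/eqP Hz] //= /eqP <-; by rewrite eqxx.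
- by move=> e1 IH1 e2 IH2 /orP [/IH1|/IH2] /andP [-> ->]; rewrite ?orbT.
- by move=> e1 IH1 e2 IH2 /orP [/IH1|/IH2] /andP [-> ->]; rewrite ?orbT.
- by move=> e1 IH1 e2 IH2 /orP [/IH1|/IH2] /andP [-> ->]; rewrite ?orbT.
Qed.

Lemma fvB_substB y x v b : fvB y (substB x v b) -> fvB y b && (y != x).
Proof.
elim: b => //=.
- by move=> e1 e2 /orP [/fvE_substE|/fvE_substE] /andP [-> ->]; rewrite ?orbT.
- by move=> e1 e2 /orP [/fvE_substE|/fvE_substE] /andP [-> ->]; rewrite ?orbT.
- by move=> e1 IH1 e2 IH2 /orP [/IH1|/IH2] /andP [-> ->]; rewrite ?orbT.
Qed.

Lemma fvP_substP y x v P : fvP y (substP x v P) -> fvP y P && (y != x).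
Proof.
elim: P => //=.
- move=> c z Q IH; case: eqP => [->|/eqP Hz] /=.
  + by move=> /andP [H1 H2]; rewrite H1 H2 eq_sym.
  + by move=> /andP [H1 /IH /andP [-> ->]]; rewrite H1.
- move=> c e Q IH /orP [/fvE_substE|/IH] /andP [-> ->]; by rewrite ?orbT.
- by move=> P1 IH1 P2 IH2 /orP [/IH1|/IH2] /andP [-> ->]; rewrite ?orbT.
- move=> b P1 IH1 P2 IH2 /orP [/orP [/fvB_substB|/IH1]|/IH2] /andP [-> ->];
  by rewrite ?orbT.
Qed.

Lemma fvP_substsP y xs vs P : size vs = size xs ->
  fvP y (substsP xs vs P) -> fvP y P && (y \notin xs).
Proof.
elim: xs vs P => [|x xs IH] [|v vs] P //=; first by move=> _ ->.
move=> Hs.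
move=> /(IH _ _ (eq_add_S _ _ Hs)) /andP [/fvP_substP /andP [H1 H2] H3].
by rewrite in_cons negb_or H1 H2 H3.
Qed.

Lemma substE_id x v e : ~~ fvE x e -> substE x v e = e.
Proof.
elim: e => //=.
- by move=> z; case: eqP.
- by move=> e1 IH1 e2 IH2; rewrite negb_or => /andP [/IH1 -> /IH2 ->].
- by move=> e1 IH1 e2 IH2; rewrite negb_or => /andP [/IH1 -> /IH2 ->].
- by move=> e1 IH1 e2 IH2; rewrite negb_or => /andP [/IH1 -> /IH2 ->].
Qed.

Lemma substB_id x v b : ~~ fvB x b -> substB x v b = b.
Proof.
elim: b => //=.
- by move=> e1 e2; rewrite negb_or => /andP [/(substE_id v) -> /(substE_id v) ->].
- by move=> e1 e2; rewrite negb_or => /andP [/(substE_id v) -> /(substE_id v) ->].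
- by move=> b IH /IH ->.
- by move=> e1 IH1 e2 IH2; rewrite negb_or => /andP [/IH1 -> /IH2 ->].
Qed.

Lemma substP_id x v P : ~~ fvP x P -> substP x v P = P.
Proof.
elim: P => //=.
- move=> c z Q IH; case: eqP => [//|Hz] /= H; rewrite IH //.
- by move=> c e Q IH; rewrite negb_or => /andP [/(substE_id v) -> /IH ->].
- by move=> e1 IH1 e2 IH2; rewrite negb_or => /andP [/IH1 -> /IH2 ->].
- by move=> b e1 IH1 e2 IH2; rewrite !negb_or => /andP [/andP [/(substB_id v) -> /IH1 ->] /IH2 ->].
Qed.

Lemma pcong_subst Dl x v P Q : defs_ok Dl -> pcong Dl P Q ->
  pcong Dl (substP x v P) (substP x v Q).
Proof.
move=> Hok; elim => {P Q} /=.
- by constructor.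
- by move=> P Q _ H; apply: pc_sym.
- by move=> P Q R _ H1 _ H2; apply: pc_trans H1 H2.
- by move=> c y P Q H IH; case: eqP => _; [apply: pc_in|apply: pc_in].
- by move=> c e P Q H IH; apply: pc_out.
- by move=> P P' Q Q' _ H1 _ H2; apply: pc_sum.
- by move=> b P P' Q Q' _ H1 _ H2; apply: pc_if.
- by move=> P; apply: pc_sum0.
- by move=> P Q; apply: pc_sumC.
- by move=> P Q R; apply: pc_sumA.
- by move=> b P Q Hb; rewrite (evalb_substB _ _ Hb); apply: pc_ifT.
- by move=> b P Q Hb; rewrite (evalb_substB _ _ Hb); apply: pc_ifF.
- move=> A vs Hs; rewrite substP_id; first by apply: pc_call.
  apply/negP => /(fvP_substsP Hs) /andP [H1 H2].
  by move: (Hok A x H1); rewrite (negbTE H2).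
Qed.

Definition psim Dl P Q := forall a P', ptrans Dl P a P' ->
  exists Q', ptrans Dl Q a Q' /\ pcong Dl P' Q'.

Lemma pcong_sim Dl P Q : defs_ok Dl -> pcong Dl P Q -> psim Dl P Q /\ psim Dl Q P.
Proof.
move=> Hok; elim => {P Q}.
- by move=> P; split => a P' H; exists P'; split => //; constructor.
- by move=> P Q _ [H1 H2]; split.
- move=> P Q R _ [H1 H2] _ [H3 H4]; split => a P' H.
  + have [Q' [HQ C1]] := H1 _ _ H; have [R' [HR C2]] := H3 _ _ HQ.
    by exists R'; split => //; apply: pc_trans C1 C2.
  + have [Q' [HQ C1]] := H4 _ _ H; have [R' [HR C2]] := H2 _ _ HQ.
    by exists R'; split => //; apply: pc_trans C1 C2.
- move=> c x P Q H _; split => a P' T; inversion T; subst.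
  + by eexists; split; [apply: pt_in|apply: pcong_subst].
  + by eexists; split; [apply: pt_in|apply: pcong_subst => //; apply: pc_sym].
- move=> c e P Q H _; split => a P' T; inversion T; subst.
  + by eexists; split; [apply: pt_out|].
  + by eexists; split; [apply: pt_out|apply: pc_sym].
- move=> P P' Q Q' _ [H1 H2] _ [H3 H4]; split => a R T; inversion T; subst.
  + by have [X [HX C]] := H1 _ _ ltac:(eassumption); exists X; split => //; apply: pt_sumL.
  + by have [X [HX C]] := H3 _ _ ltac:(eassumption); exists X; split => //; apply: pt_sumR.
  + by have [X [HX C]] := H2 _ _ ltac:(eassumption); exists X; split => //; apply: pt_sumL.
  + by have [X [HX C]] := H4 _ _ ltac:(eassumption); exists X; split => //; apply: pt_sumR.
- move=> b P P' Q Q' _ [H1 H2] _ [H3 H4]; split => a R T; inversion T; subst.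
  + by have [X [HX C]] := H1 _ _ ltac:(eassumption); exists X; split => //; apply: pt_ifT.
  + by have [X [HX C]] := H3 _ _ ltac:(eassumption); exists X; split => //; apply: pt_ifF.
  + by have [X [HX C]] := H2 _ _ ltac:(eassumption); exists X; split => //; apply: pt_ifT.
  + by have [X [HX C]] := H4 _ _ ltac:(eassumption); exists X; split => //; apply: pt_ifF.
- move=> P; split => a R T.
  + inversion T; subst; last by match goal with H : ptrans _ PNil _ _ |- _ => inversion H end.
    by exists R; split; [|constructor].
  + by exists R; split; [apply: pt_sumL|constructor].
- move=> P Q; split => a R T; exists R; (split; last by constructor);
  inversion T; subst; [apply: pt_sumR|apply: pt_sumL|apply: pt_sumR|apply: pt_sumL]; done.
- move=> P Q R; split => a X T; exists X; (split; last by constructor); inversion T; subst.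
  + by do 2 apply: pt_sumL.
  + match goal with H : ptrans _ (PSum _ _) _ _ |- _ => inversion H end; subst;
    [apply: pt_sumL; apply: pt_sumR|apply: pt_sumR]; done.
  + match goal with H : ptrans _ (PSum _ _) _ _ |- _ => inversion H end; subst;
    [apply: pt_sumL|apply: pt_sumR; apply: pt_sumL]; done.
  + by do 2 apply: pt_sumR.
- move=> b P Q Hb; split => a X T; exists X; (split; last by constructor).
  + by inversion T; subst => //; congruence.
  + by apply: pt_ifT.
- move=> b P Q Hb; split => a X T; exists X; (split; last by constructor).
  + by inversion T; subst => //; congruence.
  + by apply: pt_ifF.
- move=> A vs Hs; split => a X T; exists X; (split; last by constructor).
  + by inversion T; subst.
  + by apply: pt_call.
Qed.

Lemma occP_substP Dl c x v P : occP Dl c (substP x v P) -> occP Dl c P.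
Proof.
elim: P => //=.
- move=> d y Q IH; case: eqP => _ // H; inversion H; subst;
  [apply: occ_in_here|apply: occ_in_under; auto].
- move=> d e Q IH H; inversion H; subst;
  [apply: occ_out_here|apply: occ_out_under; auto].
- move=> P1 IH1 P2 IH2 H; inversion H; subst;
  [apply: occ_sumL; auto|apply: occ_sumR; auto].
- move=> b P1 IH1 P2 IH2 H; inversion H; subst;
  [apply: occ_ifL; auto|apply: occ_ifR; auto].
Qed.

Lemma occP_substsP Dl c xs vs P : occP Dl c (substsP xs vs P) -> occP Dl c P.
Proof.
elim: xs vs P => [|x xs IH] [|v vs] P //= /IH; apply: occP_substP.
Qed.

Lemma callocc_substP Dl c x v P : calloccP Dl c (substP x v P) -> calloccP Dl c P.
Proof.
elim: P => //=.
- move=> d y Q IH; case: eqP => _ // H; inversion H; subst; apply: co_in; auto.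
- move=> d e Q IH H; inversion H; subst; apply: co_out; auto.
- move=> P1 IH1 P2 IH2 H; inversion H; subst;
  [apply: co_sumL; auto|apply: co_sumR; auto].
- move=> b P1 IH1 P2 IH2 H; inversion H; subst;
  [apply: co_ifL; auto|apply: co_ifR; auto].
Qed.

Lemma callocc_substsP Dl c xs vs P : calloccP Dl c (substsP xs vs P) -> calloccP Dl c P.
Proof.
elim: xs vs P => [|x xs IH] [|v vs] P //= /IH; apply: callocc_substP.
Qed.

Lemma callocc_occ Dl c P : calloccP Dl c P -> occP Dl c P.
Proof.
elim => {P}.
- by move=> A vs H; apply: occ_call.
- by move=> d x P _ H; apply: occ_in_under.
- by move=> d x P _ H; apply: occ_out_under.
- by move=> P Q _ H; apply: occ_sumL.
- by move=> P Q _ H; apply: occ_sumR.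
- by move=> b P Q _ H; apply: occ_ifL.
- by move=> b P Q _ H; apply: occ_ifR.
Qed.

Lemma ptrans_occ Dl c P a P' : ptrans Dl P a P' -> occP Dl c P' -> occP Dl c P.
Proof.
elim => {P a P'}.
- by move=> d e P v _ H; apply: occ_out_under.
- by move=> d x P v /occP_substP H; apply: occ_in_under.
- by move=> P Q a P' _ IH /IH H; apply: occ_sumL.
- by move=> P Q a P' _ IH /IH H; apply: occ_sumR.
- by move=> b P Q a P' _ _ IH /IH H; apply: occ_ifL.
- by move=> b P Q a P' _ _ IH /IH H; apply: occ_ifR.
- by move=> A vs a P' _ _ IH /IH /occP_substsP H; apply: occ_call.
Qed.

Definition act_chan' := act_chan.

Lemma ptrans_chan Dl P a P' : ptrans Dl P a P' -> occP Dl (act_chan a) P.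
Proof.
elim => {P a P'} /=.
- by move=> d e P v _; apply: occ_out_here.
- by move=> d x P v; apply: occ_in_here.
- by move=> P Q a P' _ H; apply: occ_sumL.
- by move=> P Q a P' _ H; apply: occ_sumR.
- by move=> b P Q a P' _ _ H; apply: occ_ifL.
- by move=> b P Q a P' _ _ H; apply: occ_ifR.
- by move=> A vs a P' _ _ /occP_substsP H; apply: occ_call.
Qed.

Lemma ptrans_callocc Dl c P a P' : ptrans Dl P a P' -> calloccP Dl c P' -> calloccP Dl c P.
Proof.
elim => {P a P'}.
- by move=> d e P v _ H; apply: co_out.
- by move=> d x P v /callocc_substP H; apply: co_in.
- by move=> P Q a P' _ IH /IH H; apply: co_sumL.
- by move=> P Q a P' _ IH /IH H; apply: co_sumR.
- by move=> b P Q a P' _ _ IH /IH H; apply: co_ifL.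
- by move=> b P Q a P' _ _ IH /IH H; apply: co_ifR.
- by move=> A vs a P' _ _ IH /IH /callocc_substsP /callocc_occ H; apply: co_call.
Qed.

Lemma renP_id Dl c d P : ~ occP Dl c P -> renP c d P = P.
Proof.
elim: P => //=.
- move=> e x Q IH H; rewrite IH; last by move=> H'; apply: H; apply: occ_in_under.
  rewrite /renC; case: eqP => // E; subst; exfalso; apply: H; apply: occ_in_here.
- move=> e x Q IH H; rewrite IH; last by move=> H'; apply: H; apply: occ_out_under.
  rewrite /renC; case: eqP => // E; subst; exfalso; apply: H; apply: occ_out_here.
- move=> P1 IH1 P2 IH2 H; rewrite IH1 ?IH2 // => H'; apply: H;
  [apply: occ_sumR|apply: occ_sumL]; done.
- move=> b P1 IH1 P2 IH2 H; rewrite IH1 ?IH2 // => H'; apply: H;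
  [apply: occ_ifR|apply: occ_ifL]; done.
Qed.

Lemma renP_substP c d x v P : renP c d (substP x v P) = substP x v (renP c d P).
Proof.
elim: P => //=.
- by move=> e y Q IH; case: eqP => _ //=; rewrite IH.
- by move=> e ex Q ->.
- by move=> P1 -> P2 ->.
- by move=> b P1 -> P2 ->.
Qed.

Definition renA (c d : chan) (a : act) : act :=
  match a with AIn e v => AIn (renC c d e) v | AOut e v => AOut (renC c d e) v end.

Lemma renA_id c d a : act_chan a <> c -> renA c d a = a.
Proof.
by case: a => e v /= H; rewrite /renC; case: eqP.
Qed.

Lemma ptrans_call_noc Dl c A vs a P' : ~ calloccP Dl c (PCall A vs) ->
  ptrans Dl (PCall A vs) a P' -> act_chan a <> c /\ ~ occP Dl c P'.
Proof.
move=> Hc T; split.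
- move=> E; apply: Hc; apply: co_call; have := ptrans_chan T; rewrite E => H.
  by inversion H.
- move=> /(ptrans_occ T) H; apply: Hc; apply: co_call; by inversion H.
Qed.

Lemma ptrans_ren Dl c d P a P' : ptrans Dl P a P' -> ~ calloccP Dl c P ->
  ptrans Dl (renP c d P) (renA c d a) (renP c d P').
Proof.
elim => {P a P'} /=.
- by move=> e ex P v He _; apply: pt_out.
- by move=> e x P v _; rewrite renP_substP; apply: pt_in.
- by move=> P Q a P' _ IH H; apply: pt_sumL; apply: IH => H'; apply: H; apply: co_sumL.
- by move=> P Q a P' _ IH H; apply: pt_sumR; apply: IH => H'; apply: H; apply: co_sumR.
- by move=> b P Q a P' Hb _ IH H; apply: pt_ifT => //; apply: IH => H'; apply: H; apply: co_ifL.
- by move=> b P Q a P' Hb _ IH H; apply: pt_ifF => //; apply: IH => H'; apply: H; apply: co_ifR.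
- move=> A vs a P' Hs T _ H.
  have [H1 H2] := ptrans_call_noc H (pt_call Hs T).
  by rewrite renA_id // (renP_id d H2); apply: pt_call.
Qed.

Lemma ptrans_ren_inv Dl c d P a' P'' : ptrans Dl (renP c d P) a' P'' -> ~ calloccP Dl c P ->
  exists a P', [/\ a' = renA c d a, P'' = renP c d P' & ptrans Dl P a P'].
Proof.
elim: P a' P'' => /=.
- by move=> a' P'' T; inversion T.
- move=> e x Q _ a' P'' T _; inversion T; subst.
  by exists (AIn e v), (substP x v Q); split => //; [rewrite renP_substP|apply: pt_in].
- move=> e ex Q _ a' P'' T _; inversion T; subst.
  by exists (AOut e v), Q; split => //; apply: pt_out.
- move=> P1 IH1 P2 IH2 a' P'' T H; inversion T; subst.
  + have [|a [P' [E1 E2 T']]] := IH1 _ _ ltac:(eassumption).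
      by move=> H'; apply: H; apply: co_sumL.
    by exists a, P'; split => //; apply: pt_sumL.
  + have [|a [P' [E1 E2 T']]] := IH2 _ _ ltac:(eassumption).
      by move=> H'; apply: H; apply: co_sumR.
    by exists a, P'; split => //; apply: pt_sumR.
- move=> b P1 IH1 P2 IH2 a' P'' T H; inversion T; subst.
  + have [|a [P' [E1 E2 T']]] := IH1 _ _ ltac:(eassumption).
      by move=> H'; apply: H; apply: co_ifL.
    by exists a, P'; split => //; apply: pt_ifT.
  + have [|a [P' [E1 E2 T']]] := IH2 _ _ ltac:(eassumption).
      by move=> H'; apply: H; apply: co_ifR.
    by exists a, P'; split => //; apply: pt_ifF.
- move=> A vs a' P'' T H.
  have [H1 H2] := ptrans_call_noc H T.
  by exists a', P''; split => //; [rewrite renA_id|rewrite (renP_id d H2)].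
Qed.

Lemma chan_lab_fcN Dl M l M' : ntrans Dl M l M' ->
  forall c, chan_in_lab c l -> fcN Dl c M.
Proof.
elim => {M l M'} /=.
- by move=> V E Phi p c v P' Hp T c' /eqP <-; exists p => //; apply: (ptrans_chan T).
- by move=> V E Phi p c v P' Hp T c' /eqP <-; exists p => //; apply: (ptrans_chan T).
- by move=> M M' N N' D p q c v _ IH _ _ _ c' H; left; apply: IH.
- by move=> M M' N N' D p q c v _ IH _ _ _ c' H; right; apply: IH.
- by [].
- move=> M M' l c _ IH Hl c' H; split; last by apply: IH.
  by move=> E; subst; rewrite H in Hl.
- by move=> M M' D N l _ IH c H; left; apply: IH.
- by move=> M D N N' l _ IH c H; right; apply: IH.
Qed.

Lemma fcN_occN Dl c M : fcN Dl c M -> occN Dl c M.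
Proof.
elim: M => //=.
- by move=> M IH d [_ H]; right; apply: IH.
- by move=> M IH1 D N IH2 [H|H]; [left; apply: IH1|right; apply: IH2].
Qed.

Lemma base_back Dl c (V : {fset loc}) (Phi : loc -> proc) (p : loc) P' a : p \in V -> ptrans Dl (Phi p) a P' ->
  (exists2 q, q \in V & occP Dl c (upd Phi p P' q)) ->
  (exists2 q, q \in V & occP Dl c (Phi q)).
Proof.
move=> Hp T [q Hq]; rewrite /upd; case: eqP => [E|_] H; last by exists q.
by exists p => //; apply: (ptrans_occ T).
Qed.

Lemma ntrans_fcN_back Dl c M l M' : ntrans Dl M l M' -> fcN Dl c M' -> fcN Dl c M.
Proof.
elim => {M l M'} /=.
- by move=> V E Phi p d v P' Hp T; apply: base_back Hp T.
- by move=> V E Phi p d v P' Hp T; apply: base_back Hp T.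
- by move=> M M' N N' D p q d v _ IH1 _ IH2 _ [H|H]; [left; apply: IH1|right; apply: IH2].
- by move=> M M' N N' D p q d v _ IH1 _ IH2 _ [H|H]; [left; apply: IH2|right; apply: IH1].
- by move=> M M' p d v _ IH [H1 H2]; split => //; apply: IH.
- by move=> M M' l d _ IH _ [H1 H2]; split => //; apply: IH.
- by move=> M M' D N l _ IH [H|H]; [left; apply: IH|right].
- by move=> M D N N' l _ IH [H|H]; [left|right; apply: IH].
Qed.

Lemma ntrans_occN_back Dl c M l M' : ntrans Dl M l M' -> occN Dl c M' -> occN Dl c M.
Proof.
elim => {M l M'} /=.
- by move=> V E Phi p d v P' Hp T; apply: base_back Hp T.
- by move=> V E Phi p d v P' Hp T; apply: base_back Hp T.
- by move=> M M' N N' D p q d v _ IH1 _ IH2 _ [H|H]; [left; apply: IH1|right; apply: IH2].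
- by move=> M M' N N' D p q d v _ IH1 _ IH2 _ [H|H]; [left; apply: IH2|right; apply: IH1].
- by move=> M M' p d v _ IH [H|H]; [left|right; apply: IH].
- by move=> M M' l d _ IH _ [H|H]; [left|right; apply: IH].
- by move=> M M' D N l _ IH [H|H]; [left; apply: IH|right].
- by move=> M D N N' l _ IH [H|H]; [left|right; apply: IH].
Qed.

Lemma base_renok Dl c (V : {fset loc}) (Phi : loc -> proc) (p : loc) P' a : p \in V -> ptrans Dl (Phi p) a P' ->
  (forall q, q \in V -> ~ calloccP Dl c (Phi q)) ->
  (forall q, q \in V -> ~ calloccP Dl c (upd Phi p P' q)).
Proof.
move=> Hp T H q Hq; rewrite /upd; case: eqP => [E|_]; last by apply: H.
by move=> /(ptrans_callocc T); apply: H.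
Qed.

Lemma ntrans_renok Dl c M l M' : ntrans Dl M l M' -> renokN Dl c M -> renokN Dl c M'.
Proof.
elim => {M l M'} /=.
- by move=> V E Phi p d v P' Hp T; apply: base_renok Hp T.
- by move=> V E Phi p d v P' Hp T; apply: base_renok Hp T.
- by move=> M M' N N' D p q d v _ IH1 _ IH2 _ [H1 H2]; split; auto.
- by move=> M M' N N' D p q d v _ IH1 _ IH2 _ [H1 H2]; split; auto.
- by move=> M M' p d v _ IH [H|H]; [left|right; apply: IH].
- by move=> M M' l d _ IH _ [H|H]; [left|right; apply: IH].
- by move=> M M' D N l _ IH [H1 H2]; split; auto.
- by move=> M D N N' l _ IH [H1 H2]; split; auto.
Qed.

Definition renL (c d : chan) (l : lab) : lab :=
  match l with LAct p a => LAct p (renA c d a) | LTau => LTau end.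

Lemma renL_id c d l : ~~ chan_in_lab c l -> renL c d l = l.
Proof.
case: l => //= p a H; rewrite renA_id //; by move=> E; rewrite E eqxx in H.
Qed.

Lemma renP_upd c d Phi p P' :
  (fun q => renP c d (upd Phi p P' q)) = upd (fun q => renP c d (Phi q)) p (renP c d P').
Proof.
apply: functional_extensionality => q; rewrite /upd; by case: (q == p).
Qed.

Lemma res_label Dl M c l X : ntrans Dl (NRes M c) l X -> ~~ chan_in_lab c l.
Proof. by move=> T; inversion T; subst. Qed.

Lemma ntrans_ren Dl c d M l M' : ntrans Dl M l M' -> renokN Dl c M -> ~ occN Dl d M ->
  ntrans Dl (renN c d M) (renL c d l) (renN c d M').
Proof.
elim => {M l M'} /=.
- move=> V E Phi p e v P' Hp T Hr _; rewrite renP_upd.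
  have := ptrans_ren d T (Hr p Hp) => /= T'; by apply: nt_send.
- move=> V E Phi p e v P' Hp T Hr _; rewrite renP_upd.
  have := ptrans_ren d T (Hr p Hp) => /= T'; by apply: nt_recv.
- move=> M M' N N' D p q e v _ IH1 _ IH2 HD [H1 H2] Ho.
  have := IH1 H1 (fun H => Ho (or_introl H)); have := IH2 H2 (fun H => Ho (or_intror H)).
  by move=> /= T2 T1; apply: nt_bcastL T1 T2 HD.
- move=> M M' N N' D p q e v _ IH1 _ IH2 HD [H2 H1] Ho.
  have := IH1 H1 (fun H => Ho (or_intror H)); have := IH2 H2 (fun H => Ho (or_introl H)).
  by move=> /= T2 T1; apply: nt_bcastR T1 T2 HD.
- move=> M M' p e v T IH Hr Ho; case: eqP => [E|NE]. subst. exact: (nt_res1 T).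
  case: Hr => [E|Hr]; first by subst.
  have := IH Hr (fun H => Ho (or_intror H)) => /= T'.
  have Re : renC c d e = e by rewrite /renC; case: eqP.
  rewrite Re in T'; exact: nt_res1 T'.
- move=> M M' l e T IH Hl Hr Ho; case: eqP => [E|NE].
    by subst; rewrite renL_id //; apply: nt_res2.
  case: Hr => [E|Hr]; first by subst.
  apply: nt_res2; first by apply: IH => // H; apply: Ho; right.
  case: l {T IH} Hl => //= p a; case: a => f v /=; rewrite /renC;
  case: (f =P c) => [E|_] //; subst => _; apply/eqP => E; subst; apply: Ho; by left.
- move=> M M' D N l _ IH [H1 H2] Ho; apply: nt_parL; apply: IH => // H; apply: Ho; by left.
- move=> M D N N' l _ IH [H1 H2] Ho; apply: nt_parR; apply: IH => // H; apply: Ho; by right.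
Qed.

Lemma inv_base Dl V E Phi l X : ntrans Dl (NBase V E Phi) l X ->
  exists p a P', [/\ l = LAct p a, X = NBase V E (upd Phi p P'), p \in V & ptrans Dl (Phi p) a P'].
Proof.
by move=> T; inversion T; subst; do 3 eexists; split; eauto.
Qed.

Lemma base_step Dl V E Phi p a P' : p \in V -> ptrans Dl (Phi p) a P' ->
  ntrans Dl (NBase V E Phi) (LAct p a) (NBase V E (upd Phi p P')).
Proof.
by case: a => c v Hp T; [apply: nt_recv|apply: nt_send].
Qed.

Lemma inv_res Dl M c l X : ntrans Dl (NRes M c) l X ->
  (exists M' p v, [/\ l = LTau, X = NRes M' c & ntrans Dl M (LAct p (AOut c v)) M']) \/
  (exists M', [/\ X = NRes M' c, ntrans Dl M l M' & ~~ chan_in_lab c l]).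
Proof.
move=> T; inversion T; subst; [left; do 3 eexists|right; eexists]; split; eauto.
Qed.

Lemma inv_par Dl M D N l X : ntrans Dl (NPar M D N) l X ->
  (exists M' N' p q c v, [/\ l = LAct p (AOut c v), X = NPar M' D N',
      ntrans Dl M (LAct p (AOut c v)) M', ntrans Dl N (LAct q (AIn c v)) N' & edgeD D p q]) \/
  (exists M' N' p q c v, [/\ l = LAct p (AOut c v), X = NPar M' D N',
      ntrans Dl N (LAct p (AOut c v)) N', ntrans Dl M (LAct q (AIn c v)) M' & edgeD D p q]) \/
  (exists M', X = NPar M' D N /\ ntrans Dl M l M') \/
  (exists N', X = NPar M D N' /\ ntrans Dl N l N').
Proof.
move=> T; inversion T; subst.
- by left; do 6 eexists; split; eauto.
- by right; left; do 6 eexists; split; eauto.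
- by right; right; left; eexists; split; eauto.
- by right; right; right; eexists; split; eauto.
Qed.

Lemma renL_act c d l p a' : renL c d l = LAct p a' ->
  exists a, l = LAct p a /\ a' = renA c d a.
Proof. by case: l => //= p0 a [<- <-]; exists a. Qed.

Lemma renC_inj c d x y : renC c d x = renC c d y -> x <> d -> y <> d -> x = y.
Proof.
rewrite /renC; case: (x =P c); case: (y =P c); intros; congruence.
Qed.

Lemma chan_in_renL c d e l : e <> c -> chan_in_lab e l -> chan_in_lab e (renL c d l).
Proof.
case: l => //= p [] f v /= Hc /eqP E; subst e; rewrite /renC; case: (f =P c) => // E; by rewrite E in Hc.
Qed.

Lemma lab_not_d Dl d M l M' : ~ occN Dl d M -> ntrans Dl M l M' -> ~~ chan_in_lab d l.
Proof.
move=> Ho T; apply/negP => /(chan_lab_fcN T) /fcN_occN; exact: Ho.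
Qed.

Lemma ntrans_ren_inv Dl c d M : renokN Dl c M -> ~ occN Dl d M ->
  forall l' X, ntrans Dl (renN c d M) l' X ->
  exists l M', [/\ l' = renL c d l, X = renN c d M' & ntrans Dl M l M'].
Proof.
elim: M => /=.
- move=> V E Phi Hr Ho l' X /inv_base [p [a [P'' [-> -> Hp T]]]].
  have [a0 [P0 [-> -> T0]]] := ptrans_ren_inv T (Hr p Hp).
  exists (LAct p a0), (NBase V E (upd Phi p P0)); split => //.
  + by rewrite /= renP_upd.
  + by apply: base_step.
- move=> M IH e Hr Ho l' X; case: eqP => [Ee|NE].
  + subst e => T; exists l', X; split => //.
    * by rewrite renL_id //; apply: res_label T.
    * by case: (inv_res T) => [[M' [p [v [_ -> _]]]]|[M' [-> _ _]]]; rewrite /= eqxx.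
  + have Hr' : renokN Dl c M by case: Hr => // E; exfalso; apply: NE.
    have Ho' : ~ occN Dl d M by move=> H; apply: Ho; right.
    have Hed : e <> d by move=> E; apply: Ho; left.
    have NEb : (e == c) = false by apply/eqP.
    move=> /inv_res [[X0 [p [v [-> -> T]]]]|[X0 [-> T Hl]]].
    * have [l0 [M0 [El -> T0]]] := IH Hr' Ho' _ _ T.
      have [a0 [El0 Ea]] := renL_act (esym El); subst l0; clear El.
      case: a0 Ea T0 => f v0 //= [Ef <-] T0.
      have Hf : f <> d by move=> E; move: (lab_not_d Ho' T0); rewrite /= E eqxx.
      have Hfe : f = e by apply: (@renC_inj c d) => //; rewrite -Ef /renC NEb.
      subst f; exists LTau, (NRes M0 e); split => //; first by rewrite /= NEb.
      exact: nt_res1 T0.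
    * have [l0 [M0 [El -> T0]]] := IH Hr' Ho' _ _ T.
      exists l0, (NRes M0 e); split => //; first by rewrite /= NEb.
      refine (nt_res2 T0 _); apply/negP => H; move: Hl; rewrite El (chan_in_renL d NE H).
      done.
- move=> M1 IH1 D M2 IH2 [Hr1 Hr2] Ho.
  have Ho1 : ~ occN Dl d M1 by move=> H; apply: Ho; left.
  have Ho2 : ~ occN Dl d M2 by move=> H; apply: Ho; right.
  move=> l' X /inv_par [[X1 [X2 [p [q [f [v [-> -> T1 T2 HD]]]]]]]|
    [[X1 [X2 [p [q [f [v [-> -> T2 T1 HD]]]]]]]|[[X1 [-> T1]]|[X2 [-> T2]]]]].
  + have [l1 [M1' [El1 -> T1']]] := IH1 Hr1 Ho1 _ _ T1.
    have [l2 [M2' [El2 -> T2']]] := IH2 Hr2 Ho2 _ _ T2.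
    have [a1 [? Ea1]] := renL_act (esym El1); subst l1; clear El1.
    have [a2 [? Ea2]] := renL_act (esym El2); subst l2; clear El2.
    case: a1 Ea1 T1' => f1 v1 //= [Ef1 <-] T1'.
    case: a2 Ea2 T2' => f2 v2 //= [Ef2 <-] T2'.
    have Hf1 : f1 <> d by move=> E; move: (lab_not_d Ho1 T1'); rewrite /= E eqxx.
    have Hf2 : f2 <> d by move=> E; move: (lab_not_d Ho2 T2'); rewrite /= E eqxx.
    have E12 : f1 = f2 by apply: (@renC_inj c d) => //; rewrite -Ef1 -Ef2.
    subst f2; exists (LAct p (AOut f1 v)), (NPar M1' D M2'); split => //=.
    * by rewrite -Ef1.
    * exact: nt_bcastL T1' T2' HD.
  + have [l1 [M1' [El1 -> T1']]] := IH1 Hr1 Ho1 _ _ T1.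
    have [l2 [M2' [El2 -> T2']]] := IH2 Hr2 Ho2 _ _ T2.
    have [a1 [? Ea1]] := renL_act (esym El1); subst l1; clear El1.
    have [a2 [? Ea2]] := renL_act (esym El2); subst l2; clear El2.
    case: a1 Ea1 T1' => f1 v1 //= [Ef1 <-] T1'.
    case: a2 Ea2 T2' => f2 v2 //= [Ef2 <-] T2'.
    have Hf1 : f1 <> d by move=> E; move: (lab_not_d Ho1 T1'); rewrite /= E eqxx.
    have Hf2 : f2 <> d by move=> E; move: (lab_not_d Ho2 T2'); rewrite /= E eqxx.
    have E12 : f1 = f2 by apply: (@renC_inj c d) => //; rewrite -Ef1 -Ef2.
    subst f1; exists (LAct p (AOut f2 v)), (NPar M1' D M2'); split => //=.
    * by rewrite -Ef2.
    * exact: nt_bcastR T2' T1' HD.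
  + have [l1 [M1' [-> -> T1']]] := IH1 Hr1 Ho1 _ _ T1.
    by exists l1, (NPar M1' D M2); split => //; apply: nt_parL.
  + have [l2 [M2' [-> -> T2']]] := IH2 Hr2 Ho2 _ _ T2.
    by exists l2, (NPar M1 D M2'); split => //; apply: nt_parR.
Qed.

Definition nsim Dl M N := forall l M', ntrans Dl M l M' ->
  exists N', ntrans Dl N l N' /\ ncong Dl M' N'.

Lemma S_res Dl M N c : nsim Dl M N -> nsim Dl (NRes M c) (NRes N c).
Proof.
move=> H l X /inv_res [[M' [p [v [-> -> T]]]]|[M' [-> T Hl]]].
- have [N' [T' C]] := H _ _ T; exists (NRes N' c); split; [exact: nt_res1 T'|exact: nc_res].
- have [N' [T' C]] := H _ _ T; exists (NRes N' c); split; [exact: nt_res2 T' Hl|exact: nc_res].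
Qed.

Lemma S_par Dl M M' D N N' : ncong Dl M M' -> ncong Dl N N' -> nsim Dl M M' -> nsim Dl N N' ->
  nsim Dl (NPar M D N) (NPar M' D N').
Proof.
move=> CM CN H1 H2 l X /inv_par [[X1 [X2 [p [q [f [v [-> -> T1 T2 HD]]]]]]]|
    [[X1 [X2 [p [q [f [v [-> -> T2 T1 HD]]]]]]]|[[X1 [-> T1]]|[X2 [-> T2]]]]].
- have [Y1 [U1 C1]] := H1 _ _ T1; have [Y2 [U2 C2]] := H2 _ _ T2.
  by exists (NPar Y1 D Y2); split; [exact: nt_bcastL U1 U2 HD|exact: nc_par].
- have [Y1 [U1 C1]] := H1 _ _ T1; have [Y2 [U2 C2]] := H2 _ _ T2.
  by exists (NPar Y1 D Y2); split; [exact: nt_bcastR U2 U1 HD|exact: nc_par].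
- have [Y1 [U1 C1]] := H1 _ _ T1.
  by exists (NPar Y1 D N'); split; [exact: nt_parL|exact: (nc_par D C1 CN)].
- have [Y2 [U2 C2]] := H2 _ _ T2.
  by exists (NPar M' D Y2); split; [exact: nt_parR|exact: (nc_par D CM C2)].
Qed.

Lemma S_base Dl V E Phi Psi : defs_ok Dl ->
  (forall p, p \in V -> pcong Dl (Phi p) (Psi p)) ->
  nsim Dl (NBase V E Phi) (NBase V E Psi).
Proof.
move=> Hok H l X /inv_base [p [a [P' [-> -> Hp T]]]].
have [S1 _] := pcong_sim Hok (H p Hp).
have [Q' [T' C]] := S1 _ _ T.
exists (NBase V E (upd Psi p Q')); split; first exact: base_step.
apply: nc_base => q Hq; rewrite /upd; case: (q == p) => //; exact: H.
Qed.

Lemma chan_in_renL2 c d l : chan_in_lab c l -> chan_in_lab d (renL c d l).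
Proof.
case: l => //= p [] f v /= /eqP E; by rewrite /renC E eqxx.
Qed.

Lemma S_alpha1 Dl M c d : ~ occN Dl d M -> renokN Dl c M ->
  nsim Dl (NRes M c) (NRes (renN c d M) d).
Proof.
move=> Ho Hr l X /inv_res [[M' [p [v [-> -> T]]]]|[M' [-> T Hl]]].
- have T' := ntrans_ren T Hr Ho; rewrite /= /renC eqxx in T'.
  exists (NRes (renN c d M') d); split; first exact: nt_res1 T'.
  apply: nc_alpha; last exact: ntrans_renok T Hr.
  by move=> /(ntrans_occN_back T).
- have T' := ntrans_ren T Hr Ho; rewrite renL_id // in T'.
  exists (NRes (renN c d M') d); split; first exact: nt_res2 T' (lab_not_d Ho T).
  apply: nc_alpha; last exact: ntrans_renok T Hr.
  by move=> /(ntrans_occN_back T).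
Qed.

Lemma S_alpha2 Dl M c d : ~ occN Dl d M -> renokN Dl c M ->
  nsim Dl (NRes (renN c d M) d) (NRes M c).
Proof.
move=> Ho Hr l X /inv_res [[X0 [p [v [-> -> T]]]]|[X0 [-> T Hl]]].
- have [l0 [M0 [El -> T0]]] := ntrans_ren_inv Hr Ho T.
  have [a0 [? Ea]] := renL_act (esym El); subst l0; clear El.
  case: a0 Ea T0 => f v0 //= [Ef <-] T0.
  have Hf : f <> d by move=> E; move: (lab_not_d Ho T0); rewrite /= E eqxx.
  have Hfc : f = c.
    move: Ef; rewrite /renC; case: (f =P c) => // _ E; by rewrite E in Hf.
  subst f; exists (NRes M0 c); split; first exact: nt_res1 T0.
  apply: nc_sym; apply: nc_alpha; last exact: ntrans_renok T0 Hr.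
  by move=> /(ntrans_occN_back T0).
- have [l0 [M0 [El -> T0]]] := ntrans_ren_inv Hr Ho T.
  have Hl0 : ~~ chan_in_lab c l0.
    by apply/negP => /(chan_in_renL2 d); rewrite -El (negbTE Hl).
  rewrite El renL_id //; exists (NRes M0 c); split; first exact: nt_res2 T0 Hl0.
  apply: nc_sym; apply: nc_alpha; last exact: ntrans_renok T0 Hr.
  by move=> /(ntrans_occN_back T0).
Qed.

Lemma S_swap Dl M c d : nsim Dl (NRes (NRes M c) d) (NRes (NRes M d) c).
Proof.
move=> l X T; case: (c =P d) => [E|NE].
  by subst d; exists X; split => //; apply: nc_refl.
case: (inv_res T) => [[X0 [p [v [-> -> T1]]]]|[X0 [-> T1 Hl]]].
- case: (inv_res T1) => [[? [? [? [? _ _]]]]|[M' [-> T2 Hl2]]] //.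
  exists (NRes (NRes M' d) c); split; last exact: nc_swap.
  apply: nt_res2 => //; exact: nt_res1 T2.
- case: (inv_res T1) => [[M' [p [v [-> -> T2]]]]|[M' [-> T2 Hl2]]].
  + exists (NRes (NRes M' d) c); split; last exact: nc_swap.
    have Hl3 : ~~ chan_in_lab d (LAct p (AOut c v)) by apply/eqP => E; exact: NE.
    exact: nt_res1 (nt_res2 T2 Hl3).
  + exists (NRes (NRes M' d) c); split; last exact: nc_swap.
    by apply: nt_res2 => //; apply: nt_res2.
Qed.

Lemma S_comm Dl M D N : nsim Dl (NPar M D N) (NPar N D M).
Proof.
move=> l X /inv_par [[X1 [X2 [p [q [f [v [-> -> T1 T2 HD]]]]]]]|
    [[X1 [X2 [p [q [f [v [-> -> T2 T1 HD]]]]]]]|[[X1 [-> T1]]|[X2 [-> T2]]]]].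
- by exists (NPar X2 D X1); split; [exact: nt_bcastR T1 T2 HD|exact: nc_comm].
- by exists (NPar X2 D X1); split; [exact: nt_bcastL T2 T1 HD|exact: nc_comm].
- by exists (NPar N D X1); split; [exact: nt_parR|exact: nc_comm].
- by exists (NPar X2 D M); split; [exact: nt_parL|exact: nc_comm].
Qed.

Lemma no_c Dl M c p a M' : ~ fcN Dl c M -> ntrans Dl M (LAct p a) M' -> act_chan a <> c.
Proof.
move=> H T E; apply: H; apply: (chan_lab_fcN T); by rewrite /= E.
Qed.

Lemma S_extr1 Dl M D N c : ~ fcN Dl c M ->
  nsim Dl (NRes (NPar M D N) c) (NPar M D (NRes N c)).
Proof.
move=> Hc l X /inv_res [[X0 [p [v [-> -> T]]]]|[X0 [-> T Hl]]].
- case: (inv_par T) => [[X1 [X2 [p' [q [f [v' [E -> T1 T2 HD]]]]]]]|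
    [[X1 [X2 [p' [q [f [v' [E -> T2 T1 HD]]]]]]]|[[X1 [-> T1]]|[X2 [-> T2]]]]].
  + case: E => ? ? ?; subst; by case: (no_c Hc T1).
  + case: E => ? ? ?; subst; by case: (no_c Hc T1).
  + by case: (no_c Hc T1).
  + exists (NPar M D (NRes X2 c)); split; first by apply: nt_parR; apply: nt_res1 T2.
    exact: nc_extr.
- have Hc' : forall M' l, ntrans Dl M l M' -> ~ fcN Dl c M'.
    by move=> M' l0 T' /(ntrans_fcN_back T').
  case: (inv_par T) => [[X1 [X2 [p [q [f [v [El -> T1 T2 HD]]]]]]]|
    [[X1 [X2 [p [q [f [v [El -> T2 T1 HD]]]]]]]|[[X1 [-> T1]]|[X2 [-> T2]]]]].
  + subst l; exists (NPar X1 D (NRes X2 c)); split; last exact: nc_extr (Hc' _ _ T1).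
    have Hl' : ~~ chan_in_lab c (LAct q (AIn f v)) by exact: Hl.
    exact: nt_bcastL T1 (nt_res2 T2 Hl') HD.
  + subst l; exists (NPar X1 D (NRes X2 c)); split; last exact: nc_extr (Hc' _ _ T1).
    exact: nt_bcastR (nt_res2 T2 Hl) T1 HD.
  + exists (NPar X1 D (NRes N c)); split; last exact: nc_extr (Hc' _ _ T1).
    exact: nt_parL.
  + exists (NPar M D (NRes X2 c)); split; last exact: nc_extr.
    exact: nt_parR (nt_res2 T2 Hl).
Qed.

Lemma S_extr2 Dl M D N c : ~ fcN Dl c M ->
  nsim Dl (NPar M D (NRes N c)) (NRes (NPar M D N) c).
Proof.
move=> Hc.
have Hc' : forall M' l, ntrans Dl M l M' -> ~ fcN Dl c M'.
  by move=> M' l0 T' /(ntrans_fcN_back T').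
move=> l X /inv_par [[X1 [X2 [p [q [f [v [-> -> T1 T2 HD]]]]]]]|
    [[X1 [X2 [p [q [f [v [-> -> T2 T1 HD]]]]]]]|[[X1 [-> T1]]|[X2 [-> T2]]]]].
- case: (inv_res T2) => [[? [? [? [? _ _]]]]|[N' [-> T3 Hl]]] //.
  exists (NRes (NPar X1 D N') c); split; last by apply: nc_sym; apply: nc_extr (Hc' _ _ T1).
  apply: nt_res2; first exact: nt_bcastL T1 T3 HD.
  by apply/eqP => /= E; apply: (no_c Hc T1).
- case: (inv_res T2) => [[? [? [? [? _ _]]]]|[N' [-> T3 Hl]]] //.
  exists (NRes (NPar X1 D N') c); split; last by apply: nc_sym; apply: nc_extr (Hc' _ _ T1).
  by apply: nt_res2 Hl; apply: nt_bcastR T3 T1 HD.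
- exists (NRes (NPar X1 D N) c); split; last by apply: nc_sym; apply: nc_extr (Hc' _ _ T1).
  apply: nt_res2; first exact: nt_parL.
  case: l T1 => //= p a T1; apply/eqP; exact: (no_c Hc T1).
- case: (inv_res T2) => [[N' [p [v [-> -> T3]]]]|[N' [-> T3 Hl]]].
  + exists (NRes (NPar M D N') c); split; last by apply: nc_sym; apply: nc_extr.
    by apply: nt_res1; apply: nt_parR T3.
  + exists (NRes (NPar M D N') c); split; last by apply: nc_sym; apply: nc_extr.
    by apply: nt_res2 Hl; apply: nt_parR.
Qed.

Lemma ncong_sim Dl M N : defs_ok Dl -> ncong Dl M N -> nsim Dl M N /\ nsim Dl N M.
Proof.
move=> Hok; elim => {M N}.
- by move=> M; split => l X T; exists X; split => //; apply: nc_refl.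
- by move=> M N _ [H1 H2].
- move=> M N O _ [H1 H2] _ [H3 H4]; split => l X T.
  + have [Y [TY C1]] := H1 _ _ T; have [Z [TZ C2]] := H3 _ _ TY.
    by exists Z; split => //; apply: nc_trans C1 C2.
  + have [Y [TY C1]] := H4 _ _ T; have [Z [TZ C2]] := H2 _ _ TY.
    by exists Z; split => //; apply: nc_trans C1 C2.
- by move=> M N c _ [H1 H2]; split; apply: S_res.
- move=> M M' D N N' C1 [H1 H2] C2 [H3 H4]; split; apply: S_par => //;
  by apply: nc_sym.
- move=> V E Phi Psi H; split; apply: S_base => // p Hp; last apply: pc_sym; exact: H.
- by move=> M c d Ho Hr; split; [apply: S_alpha1|apply: S_alpha2].
- by move=> M c d; split; apply: S_swap.
- by move=> M D N; split; apply: S_comm.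
- by move=> M D N c Hc; split; [apply: S_extr1|apply: S_extr2].
Qed.

Theorem lemma3 (Dl : defs) (M M' N : net) (l : lab) :
  defs_ok Dl -> wf M -> wf M' -> wf N ->
  ntrans Dl M l M' -> ncong Dl M N ->
  exists N', ntrans Dl N l N' /\ ncong Dl M' N'.
Proof.
move=> Hok _ _ _ T C; have [H _] := ncong_sim Hok C; exact: H T.
Qed.
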